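(* Consider an instance with $n$ agents, $m$ divisible items and binary additive valuations (notation as in the context), and let $d$ be a real number. Then the set of items $o$ such that $x_{o,i}>0$ for some $i\in\mathsf{layer}^*_d$ is the same for every stable fractional allocation $x$. Moreover, this set consists of complete items only: for every such item $o$ and every stable $x$, $\sum_{i\in\mathsf{layer}^*_d}x_{o,i}=1$.
   Context: Agents $[n]$, items $[m]$; each agent $i$ has a set $L_i\subseteq[m]$ of liked items. A fractional allocation is a matrix $x=(x_{o,i})$ with $x_{o,i}\ge0$ and $\sum_i x_{o,i}\le1$ for each item $o$; agent $i$'s value is $\sum_{o\in L_i}x_{o,i}$. $x$ is clean if $x_{o,i}=0$ whenever $o\notin L_i$, and max-USW if it maximizes the sum of agents' values. Throughout, allocations are clean and max-USW. Profile $(h_1,\dots,h_n)$ with $h_i=\sum_o x_{o,i}$. A transfer $u\to v$: distinct agents $u=i_1,\dots,i_k=v$ ($k\ge2$), items $o_1,\dots,o_{k-1}$ with $x_{o_l,i_l}>0$ and $o_l\in L_{i_{l+1}}$, amount $0<\Delta\le\min_l x_{o_l,i_l}$, moving $\Delta$ of $o_l$ from $i_l$ to $i_{l+1}$; narrowing if $h_u-\Delta\ge h_v+\Delta$. $x$ is stable if it admits no narrowing transfer. All stable fractional allocations have the same profile; for real $d$, $\mathsf{layer}^*_d=\{i: h_i=d\}$ where $h$ is this common profile. *)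

(* Defs.v *)
From HB Require Import structures.
From mathcomp Require Import all_boot all_order all_algebra.
Set Implicit Arguments. Unset Strict Implicit. Unset Printing Implicit Defensive.
Import Order.TTheory GRing.Theory Num.Theory.
Local Open Scope ring_scope.

Section Defs.
Variables (R : realFieldType) (n m : nat) (L : 'I_n -> {set 'I_m}).

(* x o i = fraction of item o given to agent i *)
Definition frac_alloc (x : 'I_m -> 'I_n -> R) : Prop :=
  (forall o i, 0 <= x o i) /\ (forall o, \sum_(i < n) x o i <= 1).

Definition clean (x : 'I_m -> 'I_n -> R) : Prop :=
  forall o i, o \notin L i -> x o i = 0.

Definition value (x : 'I_m -> 'I_n -> R) (i : 'I_n) : R :=
  \sum_(o in L i) x o i.

Definition usw (x : 'I_m -> 'I_n -> R) : R := \sum_(i < n) value x i.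

Definition max_usw (x : 'I_m -> 'I_n -> R) : Prop :=
  frac_alloc x /\ forall y, frac_alloc y -> usw y <= usw x.

Definition profile (x : 'I_m -> 'I_n -> R) (i : 'I_n) : R :=
  \sum_(o < m) x o i.

(* A transfer along distinct agents a_0,...,a_{k+1} (so at least 2 agents)
   and items b_0,...,b_k: item b_l is held by a_l and liked by a_{l+1};
   amount Delta with 0 < Delta <= x_{b_l,a_l}. *)
Definition narrowing_transfer (x : 'I_m -> 'I_n -> R) : Prop :=
  exists (k : nat) (a : 'I_k.+2 -> 'I_n) (b : 'I_k.+1 -> 'I_m) (D : R),
    injective a /\
    (forall l : 'I_k.+1, 0 < x (b l) (a (widen_ord (leqnSn _) l))) /\
    (forall l : 'I_k.+1, b l \in L (a (lift ord0 l))) /\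
    0 < D /\
    (forall l : 'I_k.+1, D <= x (b l) (a (widen_ord (leqnSn _) l))) /\
    profile x (a ord0) - D >= profile x (a ord_max) + D.

Definition stable (x : 'I_m -> 'I_n -> R) : Prop := ~ narrowing_transfer x.

Definition good_stable (x : 'I_m -> 'I_n -> R) : Prop :=
  [/\ frac_alloc x, clean x, max_usw x & stable x].

Definition layer (x : 'I_m -> 'I_n -> R) (d : R) : {set 'I_n} :=
  [set i | profile x i == d].

Definition touched (x : 'I_m -> 'I_n -> R) (S : {set 'I_n}) : {set 'I_m} :=
  [set o | [exists i in S, 0 < x o i]].

End Defs.

(* Main.v *)
Require Import Defs.
From mathcomp Require Import all_boot all_order all_algebra.
From mathcomp Require Import lra.
Import Order.TTheory GRing.Theory Num.Theory.
Local Open Scope ring_scope.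

Section Aux.
Context {R : realFieldType} {n m : nat} {L : 'I_n -> {set 'I_m}}.
Implicit Types x y : 'I_m -> 'I_n -> R.

Lemma hold_liked {x o i} : clean L x -> 0 < x o i -> o \in L i.
Proof.
move=> cl pos; apply/negPn/negP => /cl h; by rewrite h ltxx in pos.
Qed.

Lemma edge {x o i j} : good_stable L x -> 0 < x o i -> o \in L j ->
  profile x i <= profile x j.
Proof.
case=> fx cx mx st pos lj.
have [->|nij] := eqVneq i j; first by [].
rewrite leNgt; apply/negP => lt.
apply: st.
pose a := fun t : 'I_2 => if val t == 0%N then i else j.
pose b := fun _ : 'I_1 => o.
pose D := Order.min (x o i) ((profile x i - profile x j) / 2).
have Dpos : 0 < D by rewrite lt_min pos /=; lra.
have Dle1 : D <= x o i by rewrite ge_min lexx.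
have Dle2 : D <= (profile x i - profile x j) / 2 by rewrite ge_min lexx orbT.
exists 0%N, a, b, D.
have aw : forall l : 'I_1, a (widen_ord (leqnSn 1) l) = i.
  by move=> l; rewrite /a /= (ord1 l).
split.
  move=> t1 t2; rewrite /a.
  case: t1 => [[|[|t1]] h1] //; case: t2 => [[|[|t2]] h2] //= E;
   try (by apply: val_inj); by rewrite E eqxx in nij || (rewrite E eqxx in nij).
split; first by move=> l; rewrite aw.
split; first by move=> l; rewrite /a /b /=.
split; first by [].
split; first by move=> l; rewrite aw.
rewrite /a /=; lra.
Qed.

Lemma full {x o j} : max_usw L x -> o \in L j -> \sum_(i < n) x o i = 1.
Proof.
case=> [[x0 x1] mx] lj.
set s := \sum_(i < n) x o i.
have s1 : s <= 1 by exact: x1.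
rewrite (@le_anti _ _ s 1) // s1 /=; rewrite leNgt; apply/negP => slt.
pose y := fun o' i' => x o' i' + (if (o' == o) && (i' == j) then 1 - s else 0).
have ind : forall o', \sum_(i < n) (if (o' == o) && (i == j) then 1 - s else 0)
     = if o' == o then 1 - s else 0.
  move=> o'; rewrite (bigD1 j) //= eqxx andbT big1 ?addr0 //.
  by move=> i /negPf ->; rewrite andbF.
have fy : frac_alloc y.
  split.
    move=> o' i'; rewrite /y; case: ifP => _; last by rewrite addr0.
    by apply: addr_ge0 => //; lra.
  move=> o'; rewrite /y big_split /= ind; have := x1 o'; case: eqP => [->|_]; rewrite /s; lra.
have := mx y fy; rewrite /usw /value.
have -> : \sum_(i < n) \sum_(o0 in L i) y o0 i =
   \sum_(i < n) \sum_(o0 in L i) x o0 i + (1 - s).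
  rewrite /y; under eq_bigr => i _ do rewrite big_split /=.
  rewrite big_split /=; congr (_ + _).
  rewrite (bigD1 j) //=.
  have -> : \sum_(i < n | i != j) \sum_(o0 in L i)
     (if (o0 == o) && (i == j) then 1 - s else 0) = 0.
    apply: big1 => i /negPf nj; apply: big1 => o' _; by rewrite nj andbF.
  rewrite addr0 (bigD1 o lj) /= !eqxx /= big1 ?addr0 //.
  by move=> o' /andP[_ /negPf ->].
lra.
Qed.

Definition upc (h : 'I_n -> R) (S : {set 'I_n}) :=
  forall i j, i \in S -> h i <= h j -> j \in S.

Lemma outside_zero {x y S o i j} : good_stable L x -> good_stable L y ->
  upc (profile x) S -> i \in S -> 0 < x o i -> j \notin S -> y o j = 0.
Proof.
move=> gx [[y0 _] cy _ _] uS iS pos jS.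
apply/eqP; rewrite eq_le y0 andbT leNgt; apply/negP => yp.
have lj := hold_liked (x:=y) cy yp.
by move: jS; rewrite (uS i j iS (edge gx pos lj)).
Qed.

Lemma sumS_full {x y S o i} : good_stable L x -> good_stable L y ->
  upc (profile x) S -> i \in S -> 0 < x o i -> \sum_(k in S) y o k = 1.
Proof.
move=> gx gy uS iS pos.
have li : o \in L i by case: gx => _ cx _ _; exact: (hold_liked (x:=x) cx pos).
case: (gy) => _ _ my _.
rewrite -(full my li) [RHS](bigID (mem S)) /= [X in _ = _ + X]big1 ?addr0 //.
by move=> k kS; exact: (outside_zero gx gy uS iS pos kS).
Qed.

Lemma pointwise {x y S} o : good_stable L x -> good_stable L y ->
  upc (profile x) S -> \sum_(k in S) x o k <= \sum_(k in S) y o k.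
Proof.
move=> gx gy uS.
case: (gx) => [[x0 _] _ _ _]; case: (gy) => [[y0 _] _ _ _].
have [/existsP [i /andP[iS pos]]|none] := boolP [exists i in S, 0 < x o i] .
  by rewrite (sumS_full gx gx uS iS pos) (sumS_full gx gy uS iS pos).
rewrite big1; first by apply: sumr_ge0.
move=> k kS; apply/eqP; rewrite eq_le x0 andbT leNgt; apply/negP => p.
by move/negP: none; apply; apply/existsP; exists k; rewrite kS p.
Qed.

Lemma sum_le {x y S} : good_stable L x -> good_stable L y ->
  upc (profile x) S ->
  \sum_(i in S) profile x i <= \sum_(i in S) profile y i.
Proof.
move=> gx gy uS; rewrite /profile.
rewrite (exchange_big _ _ _ _ _ (fun i o => x o i)).
rewrite (exchange_big _ _ _ _ _ (fun i o => y o i)).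
by apply: ler_sum => o _; apply: pointwise.
Qed.

Lemma noexc {x y u} : good_stable L x -> good_stable L y ->
  (forall i, profile x i != profile y i ->
     Num.max (profile x i) (profile y i) <= Num.max (profile x u) (profile y u)) ->
  ~ (profile y u < profile x u).
Proof.
move=> gx gy mx lt.
set c := profile x u.
have uS : upc (profile x) [set i | c <= profile x i].
  by move=> i j; rewrite !inE => ci ij; exact: le_trans ci ij.
have := sum_le gx gy uS.
have hS : forall i, i \in [set i | c <= profile x i] -> profile y i <= profile x i.
  move=> i; rewrite inE => ci.
  have [->|ne] := eqVneq (profile x i) (profile y i); first by [].
  have := mx i ne; rewrite /c (max_idPl (ltW lt)) => h.
  by apply: le_trans (le_trans _ h) ci; rewrite le_max lexx orbT.
have uin : u \in [set i | c <= profile x i] by rewrite inE.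
rewrite (bigD1 u uin) [X in _ <= X](bigD1 u uin) /=.
apply/negP; rewrite -ltNge; apply: ltr_leD => //.
by apply: ler_sum => i /andP[iS _]; exact: hS.
Qed.

Lemma prof_eq {x y} : good_stable L x -> good_stable L y -> profile x =1 profile y.
Proof.
move=> gx gy i0; apply/eqP/negPn/negP => ne0.
pose P := [pred i | profile x i != profile y i].
have : P i0 by [].
move=> Pi0.
case: (arg_maxP (fun i => Num.max (profile x i) (profile y i)) Pi0) => u Pu mx.
have mx' : forall i, P i -> Num.max (profile x i) (profile y i) <= Num.max (profile x u) (profile y u) by move=> i Pi; exact: mx.
move: Pu; rewrite /P inE neq_lt => /orP[lt|lt].
  apply: (noexc gy gx (u:=u)) => // i; rewrite eq_sym => ne.
  by rewrite maxC [X in _ <= X]maxC; exact: mx'.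
exact: (noexc gx gy mx').
Qed.

Lemma touchedE x S o : frac_alloc x ->
  (o \in touched x S) = (0 < \sum_(i in S) x o i).
Proof.
case=> x0 _; rewrite inE.
rewrite lt_def (sumr_ge0 _ (fun i _ => x0 o i)) andbT.
rewrite (psumr_neq0 _ (fun i _ => x0 o i)).
apply/existsP/hasP => [[i /andP[iS p]]|[i _ /andP[iS p]]]; exists i => //;
  by rewrite ?mem_index_enum ?iS ?p.
Qed.

Lemma split_layer (z : 'I_m -> 'I_n -> R) d (F : 'I_n -> R) :
  \sum_(i in layer z d) F i =
  \sum_(i in [set i | d <= profile z i]) F i - \sum_(i in [set i | d < profile z i]) F i.
Proof.
rewrite (bigID (mem [set i | d < profile z i]) (mem [set i | d <= profile z i])) /=.
have -> : \sum_(i in [set i | d < profile z i]) F i =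
  \sum_(i | (i \in [set i | d <= profile z i]) && (i \in [set i | d < profile z i])) F i.
  apply: eq_bigl => i; rewrite !inE; case: (ltP d (profile z i)) => //= h.
    by rewrite andbT (ltW h).
  by rewrite andbF.
rewrite addrAC subrr add0r; apply: eq_bigl => i; rewrite !inE le_eqVlt.
case: (ltP d (profile z i)) => h /=.
  by rewrite orbT andbF (gt_eqF h).
by rewrite orbF andbT eq_sym.
Qed.
End Aux.

Theorem lemma5 (R : realFieldType) (n m : nat) (L : 'I_n -> {set 'I_m})
    (d : R) (z x y : 'I_m -> 'I_n -> R) :
  good_stable L z -> good_stable L x -> good_stable L y ->
  touched x (layer z d) = touched y (layer z d) /\
  (forall o, o \in touched x (layer z d) ->
     \sum_(i in layer z d) x o i = 1).
Proof.
move=> gz gx gy.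
have ex := prof_eq gz gx; have ey := prof_eq gz gy.
have upG : forall w : 'I_m -> 'I_n -> R, profile z =1 profile w ->
    upc (profile w) [set i | d <= profile z i].
  by move=> w e i j; rewrite !inE (e i) (e j) => h1 h2; exact: le_trans h1 h2.
have upT : forall w : 'I_m -> 'I_n -> R, profile z =1 profile w ->
    upc (profile w) [set i | d < profile z i].
  by move=> w e i j; rewrite !inE (e i) (e j) => h1 h2; exact: lt_le_trans h1 h2.
have exy : profile x =1 profile y by move=> i; rewrite -ex ey.
have eyx : profile y =1 profile x by move=> i; rewrite -ey ex.
have ezx : profile z =1 profile x := ex.
have eqG : forall o, \sum_(i in [set i | d <= profile z i]) x o i =
                     \sum_(i in [set i | d <= profile z i]) y o i.
  move=> o; apply/eqP; rewrite eq_le.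
  by rewrite (pointwise o gx gy (upG _ ex)) (pointwise o gy gx (upG _ ey)).
have eqT : forall o, \sum_(i in [set i | d < profile z i]) x o i =
                     \sum_(i in [set i | d < profile z i]) y o i.
  move=> o; apply/eqP; rewrite eq_le.
  by rewrite (pointwise o gx gy (upT _ ex)) (pointwise o gy gx (upT _ ey)).
have eqL : forall o, \sum_(i in layer z d) x o i = \sum_(i in layer z d) y o i.
  by move=> o; rewrite !split_layer eqG eqT.
split.
  apply/setP => o; case: (gx) => fx _ _ _; case: (gy) => fy _ _ _.
  by rewrite (touchedE _ _ _ fx) (touchedE _ _ _ fy) eqL.
move=> o; rewrite inE => /existsP [i /andP[iL pos]].
have iG : i \in [set i | d <= profile z i].
  by move: iL; rewrite !inE => /eqP ->.
have iT : i \notin [set i | d < profile z i].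
  by move: iL; rewrite !inE => /eqP ->; rewrite ltxx.
rewrite split_layer (sumS_full gx gx (upG _ ex) iG pos).
rewrite big1 ?subr0 // => j jT.
case: (gx) => [[x0 _] _ _ _].
apply/eqP; rewrite eq_le x0 andbT leNgt; apply/negP => p.
have := outside_zero gx gx (upT _ ex) jT p iT.
by move=> e; rewrite e ltxx in pos.
Qed.
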